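(* Index the coordinates of $\mathbb{R}^9$ by $1,\dots,9$. Let $\mathcal{S}$ be the following family of $18$ four-element subsets of $\{1,\dots,9\}$: $\{1,2,4,5\}$, $\{1,2,6,9\}$, $\{1,2,7,8\}$, $\{1,3,4,6\}$, $\{1,3,5,8\}$, $\{1,3,7,9\}$, $\{1,4,8,9\}$, $\{1,5,6,7\}$, $\{2,3,4,7\}$, $\{2,3,5,6\}$, $\{2,3,8,9\}$, $\{2,4,6,8\}$, $\{2,5,7,9\}$, $\{3,4,5,9\}$, $\{3,6,7,8\}$, $\{4,5,7,8\}$, $\{4,6,7,9\}$, $\{5,6,8,9\}$. Let $C\subset\mathbb{R}^9$ consist of the $18$ vectors $\pm 2e_j$ ($j=1,\dots,9$, $e_j$ the standard basis vectors) together with the $288$ vectors having entries $\pm1$ (arbitrary signs) on the coordinates of some $S\in\mathcal{S}$ and $0$ elsewhere; so $|C|=306$. Let $\sigma:\mathbb{R}^9\to\mathbb{R}^9$ be the coordinate permutation swapping coordinates $2$ and $3$ and swapping coordinates $4$ and $7$ (fixing the others). Let $C'=\bigl(C\setminus\{x\in C: x_1=1\}\bigr)\cup\{\sigma(x): x\in C,\ x_1=1\}$. Then $C$ and $C'$ are both kissing configurations of $306$ points in $\mathbb{R}^9$, and they are not isometric. In particular, there are at least two non-isometric kissing configurations of $306$ points in nine dimensions.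
   Context: A kissing configuration in $\mathbb{R}^n$ is a finite set of vectors all of the same norm $r>0$ such that any two distinct vectors have inner product at most $r^2/2$ (angle at least $\pi/3$); here all vectors have squared norm $4$, so distinct vectors must have inner product at most $2$. Two configurations are isometric if some orthogonal transformation of $\mathbb{R}^n$ maps one onto the other. *)

(* Defs.v *)
(* Vectors of R^n are row vectors 'rV[R]_n over an arbitrary
   R : realType (the real numbers).  Coordinates 1..9 of the paper are the
   ordinals 0..8 here. *)
From HB Require Import structures.
From mathcomp Require Import all_boot all_order all_algebra.
From mathcomp Require Import reals.
Set Implicit Arguments. Unset Strict Implicit. Unset Printing Implicit Defensive.
Import Order.TTheory GRing.Theory Num.Theory.
Local Open Scope ring_scope.

Section Kissing.
Variable R : realType.

Definition dotv n (u v : 'rV[R]_n) : R := \sum_(i < n) u 0 i * v 0 i.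

Definition kissing_config n (X : seq 'rV[R]_n) : Prop :=
  exists r : R, 0 < r /\
    (forall x, x \in X -> dotv x x = r ^+ 2) /\
    (forall x y, x \in X -> y \in X -> x != y -> dotv x y <= r ^+ 2 / 2).

Definition npoints n (X : seq 'rV[R]_n) : nat := size (undup X).

Definition orthogonal_mx n (Q : 'M[R]_n) : Prop := Q *m Q^T = 1%:M.

Definition isometric n (X Y : seq 'rV[R]_n) : Prop :=
  exists Q : 'M[R]_n, orthogonal_mx Q /\ [seq x *m Q | x <- X] =i Y.

Definition ev (j : 'I_9) : 'rV[R]_9 := delta_mx 0 j.

(* the family S, coordinates shifted by one (paper's k is ordinal k-1) *)
Definition fam_nat : seq (seq nat) :=
  [:: [:: 1;2;4;5]; [:: 1;2;6;9]; [:: 1;2;7;8]; [:: 1;3;4;6]; [:: 1;3;5;8];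
      [:: 1;3;7;9]; [:: 1;4;8;9]; [:: 1;5;6;7]; [:: 2;3;4;7]; [:: 2;3;5;6];
      [:: 2;3;8;9]; [:: 2;4;6;8]; [:: 2;5;7;9]; [:: 3;4;5;9]; [:: 3;6;7;8];
      [:: 4;5;7;8]; [:: 4;6;7;9]; [:: 5;6;8;9] ].

Definition fam : seq (seq 'I_9) :=
  [seq [seq (inord k.-1 : 'I_9) | k <- T] | T <- fam_nat].

Definition signvec (T : seq 'I_9) (s : {ffun 'I_4 -> bool}) : 'rV[R]_9 :=
  \sum_(k < 4) (if s k then 1 else -1) *: ev (nth ord0 T k).

Definition Cconf : seq 'rV[R]_9 :=
  [seq 2 *: ev j | j <- enum 'I_9] ++ [seq (-2) *: ev j | j <- enum 'I_9] ++
  [seq signvec T s | T <- fam, s <- enum {ffun 'I_4 -> bool}].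

(* sigma swaps coordinates 2<->3 and 4<->7 (ordinals 1<->2, 3<->6) *)
Definition sig_idx (i : 'I_9) : 'I_9 :=
  inord (match val i with 1 => 2 | 2 => 1 | 3 => 6 | 6 => 3 | k => k end)%N.

Definition sigma (x : 'rV[R]_9) : 'rV[R]_9 := \row_i x 0 (sig_idx i).

Definition Cconf' : seq 'rV[R]_9 :=
  [seq x : 'rV[R]_9 <- Cconf | x 0 ord0 != 1] ++
  [seq sigma x | x : 'rV[R]_9 <- Cconf & x 0 ord0 == 1].

End Kissing.

(* Main.v *)
Require Import Defs.
From mathcomp Require Import reals.
From mathcomp Require Import ring lra.
From HB Require Import structures.
From mathcomp Require Import all_boot all_order all_algebra.
Import Order.TTheory GRing.Theory Num.Theory.
Local Open Scope ring_scope.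

Definition cc (b e : bool) : int := if e then (if b then 1 else -1) else 0.
Definition coef (T : seq nat) (b : seq bool) (i : nat) : int :=
  cc (nth false b 0) (nth 0%N T 0 == i)%N +
  (cc (nth false b 1) (nth 0%N T 1 == i)%N +
  (cc (nth false b 2) (nth 0%N T 2 == i)%N +
  (cc (nth false b 3) (nth 0%N T 3 == i)%N + 0))).
Definition isv T b : seq int := mkseq (coef T b) 9.
Definition bools : seq bool := [:: true; false].
Definition signs : seq (seq bool) :=
  [:: [:: true; true; true; true]; [:: true; true; true; false]; [:: true; true; false; true]; [:: true; true; false; false]; [:: true; false; true; true]; [:: true; false; true; false]; [:: true; false; false; true]; [:: true; false; false; false]; [:: false; true; true; true]; [:: false; true; true; false]; [:: false; true; false; true]; [:: false; true; false; false]; [:: false; false; true; true]; [:: false; false; true; false]; [:: false; false; false; true]; [:: false; false; false; false]].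
Definition ie (c : int) (j : nat) : seq int := mkseq (fun i => if i == j then c else 0) 9.
Definition famN : seq (seq nat) := [seq [seq k.-1 | k <- T] | T <- fam_nat].
Definition Cint : seq (seq int) :=
  [seq ie 2 j | j <- iota 0 9] ++ [seq ie (-2) j | j <- iota 0 9] ++
  [seq isv T s | T <- famN, s <- signs].
Definition sig_nat (i : nat) : nat := match i with 1 => 2 | 2 => 1 | 3 => 6 | 6 => 3 | k => k end%N.
Definition isig (v : seq int) : seq int := mkseq (fun i => nth 0 v (sig_nat i)) 9.
Definition C'int : seq (seq int) :=
  [seq v <- Cint | nth 0 v 0 != 1] ++ [seq isig v | v <- Cint & nth 0 v 0 == 1].
Definition idot (u v : seq int) : int := foldr (fun i a => nth 0 u i * nth 0 v i + a) 0 (iota 0 9).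
Definition check (Y : seq (seq int)) : bool :=
  [&& all (fun u => (size u == 9%N) && (idot u u == 4)) Y,
      all (fun u => all (fun v => (u == v) || (idot u v <= 2)) Y) Y,
      uniq Y & size Y == 306%N].

Lemma checkC : check Cint. Proof. vm_compute. reflexivity. Qed.
Lemma checkC' : check C'int. Proof. vm_compute. reflexivity. Qed.
Lemma noC : all (fun u => all (fun v => idot u v != -3) Cint) Cint. Proof. vm_compute. reflexivity. Qed.
Lemma yesC' : has (fun u => has (fun v => idot u v == -3) C'int) C'int. Proof. vm_compute. reflexivity. Qed.

Definition tovec (R : realType) (v : seq int) : 'rV[R]_9 := \row_(i < 9) (nth 0 v i)%:~R.

Lemma tovec_inj (R : realType) u v : size u = 9%N -> size v = 9%N -> tovec R u = tovec R v -> u = v.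
Proof.
move=> su sv /rowP H; apply: (@eq_from_nth _ 0) => [|i]; first by rewrite su sv.
rewrite su => Hi; have := H (Ordinal Hi); rewrite !mxE; move/eqP; rewrite eqr_int => /eqP //.
Qed.

Lemma dot_tovec (R : realType) u v : dotv (tovec R u) (tovec R v) = (idot u v)%:~R.
Proof.
rewrite /dotv /idot. under eq_bigr do rewrite !mxE.
rewrite -(big_mkord xpredT (fun i => (nth 0 u i)%:~R * (nth 0 v i)%:~R :> R)) /index_iota subn0.
elim: (iota 0 9) => [|k r IH]; first by rewrite big_nil.
by rewrite big_cons IH /= intrD intrM.
Qed.

Lemma dotv_mx (R : realType) (x y : 'rV[R]_9) : dotv x y = (x *m y^T) 0 0.
Proof. by rewrite /dotv mxE; apply: eq_bigr => i _; rewrite mxE. Qed.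

Lemma dotv_Q (R : realType) (Q : 'M[R]_9) x y : Q *m Q^T = 1%:M -> dotv (x *m Q) (y *m Q) = dotv x y.
Proof. by move=> HQ; rewrite !dotv_mx trmx_mul mulmxA -(mulmxA x Q) HQ mulmx1. Qed.

Lemma ie_ev (R : realType) (c : int) (j : 'I_9) : c%:~R *: ev R j = tovec R (ie c j).
Proof.
apply/rowP => i; rewrite !mxE nth_mkseq //=.
have -> : ((i : nat) == j) = (i == j) by [].
by case: (i == j); rewrite /= ?mulr1 ?mulr0.
Qed.

Lemma nth_val (T : seq 'I_9) k : nat_of_ord (nth ord0 T k) = nth 0%N (map val T) k.
Proof. by elim: T k => [|t T IH] [|k] //=. Qed.

Lemma signvec_isv (R : realType) T s :
  signvec R T s = tovec R (isv (map val T) [:: s ord0; s (lift ord0 (ord0 : 'I_3)); s (lift ord0 (lift ord0 (ord0 : 'I_2))); s (lift ord0 (lift ord0 (lift ord0 (ord0 : 'I_1))))]).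
Proof.
apply/rowP => i; rewrite /signvec summxE !big_ord_recl big_ord0 !mxE nth_mkseq //.
rewrite /coef /= -!nth_val.
have E : forall (b : bool) (t : 'I_9), (if b then 1 else -1) * ((0 == 0 :> 'I_1) && (i == t))%:R = (cc b (nat_of_ord t == i))%:~R :> R.
  move=> b t; rewrite eqxx /= eq_sym /cc; have -> : (t == i) = ((t : nat) == i) by [].
  by case: (_ == _); case: b; rewrite /= ?mulr1 ?mulr0.
by rewrite !E !intrD.
Qed.

Lemma famE : map (map val) fam = famN.
Proof.
rewrite /fam /famN -map_comp; apply/eq_in_map => T HT /=.
rewrite -map_comp; apply/eq_in_map => k Hk /=; rewrite inordK //.
have : all (all (fun k => k.-1 < 9)%N) fam_nat by [].
by move/allP/(_ _ HT)/allP/(_ _ Hk).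
Qed.

Lemma ieC (R : realType) (c : int) :
  [seq c%:~R *: ev R j | j <- enum 'I_9] = map (tovec R) [seq ie c j | j <- iota 0 9].
Proof.
rewrite -val_enum_ord -!map_comp; apply: eq_map => j /=; exact: ie_ev.
Qed.

Lemma memC (R : realType) : Cconf R =i map (tovec R) Cint.
Proof.
move=> x; rewrite /Cconf /Cint map_cat mem_cat map_cat mem_cat.
have -> : (2 : R) = (2 : int)%:~R by [].
have -> : (-2 : R) = (-2 : int)%:~R by rewrite mulrNz.
rewrite !ieC.
set A := (x \in [seq signvec _ _ _ | _ <- _, _ <- _]).
suff -> : A = (x \in map (tovec R) [seq isv T b | T <- famN, b <- signs]) by rewrite mem_cat mem_cat.
rewrite /A.
apply/idP/idP.
- case/allpairsPdep => T [s [HT _ ->]].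
  rewrite signvec_isv; apply: map_f; apply/allpairsPdep.
  exists (map val T); eexists; split => //=; first by rewrite -famE map_f.
  by case: (s _); case: (s _); case: (s _); case: (s _).
- case/mapP => y /allpairsPdep [T [b [HT Hb ->]]] ->.
  move: HT; rewrite -famE => /mapP [T' HT' ->].
  apply/allpairsPdep; exists T', [ffun k : 'I_4 => nth false b k]; split => //=.
  + by rewrite mem_enum.
  rewrite signvec_isv !ffunE /=.
  have : all (fun b : seq bool => size b == 4%N) signs by [].
  by move/allP/(_ _ Hb); case: b Hb => [|? [|? [|? [|? []]]]].
Qed.

Lemma sigma_tovec (R : realType) v : sigma (tovec R v) = tovec R (isig v).
Proof.
apply/rowP => i; rewrite !mxE nth_mkseq //.
have H : nat_of_ord (sig_idx i) = sig_nat i.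
  case: i => k Hk; rewrite /sig_idx /sig_nat /= inordK;
  by case: k Hk => [|[|[|[|[|[|[|[|[|k]]]]]]]]].
by rewrite H.
Qed.

Lemma tovec00 (R : realType) v (c : int) : ((tovec R v) 0 ord0 == c%:~R) = (nth 0 v 0 == c).
Proof. by rewrite mxE eqr_int. Qed.

Lemma memC' (R : realType) : Cconf' R =i map (tovec R) C'int.
Proof.
have E1 : forall Q : pred 'rV[R]_9, filter Q (Cconf R) =i filter Q (map (tovec R) Cint).
  by move=> Q y; rewrite !mem_filter memC.
move=> x; rewrite /Cconf' /C'int map_cat !mem_cat E1 (eq_mem_map _ (E1 _)).
have -> : (1 : R) = (1 : int)%:~R by [].
rewrite !filter_map -!map_comp.
have F1 : forall c : int, [seq v <- Cint | preim (tovec R) (fun x0 : 'rV_9 => x0 0 ord0 != c%:~R) v] = [seq v <- Cint | nth 0 v 0 != c].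
  by move=> c; apply: eq_filter => v /=; rewrite tovec00.
have F2 : forall c : int, [seq v <- Cint | preim (tovec R) (fun x0 : 'rV_9 => x0 0 ord0 == c%:~R) v] = [seq v <- Cint | nth 0 v 0 == c].
  by move=> c; apply: eq_filter => v /=; rewrite tovec00.
rewrite F1 F2; congr (_ || _).
have -> : [seq ((@sigma R) \o tovec R) i | i <- Cint & i`_0 == 1] = [seq (tovec R \o isig) i | i <- Cint & i`_0 == 1].
  by apply: eq_map => v; exact: sigma_tovec.
by [].
Qed.

Lemma kiss_of (R : realType) X Y : X =i map (tovec R) Y -> check Y -> kissing_config X.
Proof.
move=> HX /and4P [H1 H2 _ _]; exists 2; split; first by lra.
split.
- move=> x; rewrite HX => /mapP [u Hu ->]; rewrite dot_tovec.
  move/allP: H1 => /(_ _ Hu) /andP [_ /eqP ->].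
  have -> : (4 : int)%:~R = 4 :> R by [].
  by rewrite expr2; lra.
- move=> x y; rewrite !HX => /mapP [u Hu ->] /mapP [v Hv ->] Hne.
  rewrite dot_tovec.
  move/allP: H2 => /(_ _ Hu) /allP /(_ _ Hv) /orP [/eqP Euv | Hle].
    by move: Hne; rewrite Euv eqxx.
  have -> : (2 : R) ^+ 2 / 2 = (2 : int)%:~R by rewrite expr2 /=; field.
  by rewrite ler_int.
Qed.

Lemma np_of (R : realType) X Y : X =i map (tovec R) Y -> check Y -> npoints X = 306%N.
Proof.
move=> HX /and4P [H1 _ Hu /eqP Hs].
have U : uniq (map (tovec R) Y).
  rewrite map_inj_in_uniq // => u v Hu' Hv'; apply: tovec_inj.
  + by move/allP: H1 => /(_ _ Hu') /andP [/eqP].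
  + by move/allP: H1 => /(_ _ Hv') /andP [/eqP].
rewrite /npoints (perm_size (uniq_perm (undup_uniq X) U _)) ?size_map //.
by move=> z; rewrite mem_undup HX.
Qed.

Theorem mainTheorem3 (R : realType) :
  [/\ kissing_config (Cconf R), kissing_config (Cconf' R),
      npoints (Cconf R) = 306%N, npoints (Cconf' R) = 306%N
    & ~ isometric (Cconf R) (Cconf' R)].
Proof.
split.
- exact: kiss_of (@memC R) checkC.
- exact: kiss_of (@memC' R) checkC'.
- exact: np_of (@memC R) checkC.
- exact: np_of (@memC' R) checkC'.
move=> [Q [HQ HM]].
case/hasP: yesC' => y1 Hy1 /hasP [y2 Hy2 /eqP Hd].
have : tovec R y1 \in [seq x *m Q | x <- Cconf R] by rewrite HM memC' map_f.
case/mapP => x1; rewrite memC => /mapP [u1 Hu1 ->] E1.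
have : tovec R y2 \in [seq x *m Q | x <- Cconf R] by rewrite HM memC' map_f.
case/mapP => x2; rewrite memC => /mapP [u2 Hu2 ->] E2.
have := @dotv_Q R Q (tovec R u1) (tovec R u2) HQ.
rewrite -E1 -E2 !dot_tovec Hd => /eqP; rewrite eqr_int => /eqP H.
by move/allP: noC => /(_ _ Hu1) /allP /(_ _ Hu2); rewrite -H.
Qed.
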